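(* Let $n,m\ge 5$ be integers with $m\equiv 2\pmod 4$ and $n\equiv 2\pmod 4$. Then $\gamma_p(C_n\times C_m)\le\frac{(n+2)(m+2)}{4}-6$.
   Context: All graphs are finite, simple and undirected. $C_n$ denotes the cycle of order $n$ and $G\times H$ the Cartesian product of graphs. For a graph $G$ without isolated vertices, a set $D\subseteq V(G)$ is a paired dominating set if every vertex outside $D$ has a neighbour in $D$ and the induced subgraph $G[D]$ has a perfect matching; $\gamma_p(G)$ is the minimum size of a paired dominating set. *)

(* Defs.v *)
From mathcomp Require Import all_boot all_order.
Set Implicit Arguments. Unset Strict Implicit. Unset Printing Implicit Defensive.

Definition cyc_adj (n : nat) (i j : 'I_n) : bool :=
  (j == (i.+1 %% n) :> nat) || (i == (j.+1 %% n) :> nat).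

Definition cprod_adj (n m : nat) : rel ('I_n * 'I_m) :=
  fun x y => ((x.1 == y.1) && cyc_adj x.2 y.2) || ((x.2 == y.2) && cyc_adj x.1 y.1).

Section Paired.
Variables (T : finType) (e : rel T).

Definition dominating (D : {set T}) : Prop :=
  forall x, x \notin D -> exists2 y, y \in D & e x y.

(* G[D] has a perfect matching: a fixed-point-free involution on D along edges *)
Definition has_perfect_matching (D : {set T}) : Prop :=
  exists f : T -> T, forall x, x \in D ->
    [/\ f x \in D, e x (f x) & f (f x) = x].

Definition paired_dominating (D : {set T}) : Prop :=
  dominating D /\ has_perfect_matching D.

Definition is_gamma_p (k : nat) : Prop :=
  (exists D, paired_dominating D /\ #|D| = k) /\
  (forall D, paired_dominating D -> k <= #|D|).
End Paired.

(* Main.v *)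
Require Import Defs.
From mathcomp Require Import all_boot all_order.
From mathcomp Require Import zify.
From Stdlib Require Import Classical.
Set Implicit Arguments. Unset Strict Implicit. Unset Printing Implicit Defensive.

Definition sm n i := if i.+1 == n then 0 else i.+1.
Definition pm n i := if i == 0 then n.-1 else i.-1.
Definition nbi n k i := match k with 0 => sm n i | 1 => pm n i | _ => i end.
Definition nbj m k j := match k with 2 => sm m j | 3 => pm m j | _ => j end.
Definition opp k := match k with 0 => 1 | 1 => 0 | 2 => 3 | _ => 2 end.

Lemma sm_lt n i : i < n -> sm n i < n.
Proof. rewrite /sm; case: ifP => /eqP; lia. Qed.
Lemma pm_lt n i : i < n -> pm n i < n.
Proof. rewrite /pm; case: ifP => /eqP; lia. Qed.
Lemma smE n i : i < n -> i.+1 %% n = sm n i.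
Proof.
rewrite /sm; case: ifP => [/eqP -> _|/eqP H Hi]; first by rewrite modnn.
by rewrite modn_small //; lia.
Qed.
Lemma pm_sm n i : i < n -> pm n (sm n i) = i.
Proof.
rewrite /pm /sm => H; have [E|E] := eqVneq i.+1 n; first by rewrite eqxx; lia.
by [].
Qed.
Lemma sm_pm n i : i < n -> sm n (pm n i) = i.
Proof.
rewrite /pm /sm => H; have [E|E] := eqVneq i 0.
  by rewrite E; case: n H => [|[|k]] //= _; rewrite eqxx.
case: i E H => [|i] //= _ H; by rewrite ifN //; apply/eqP; lia.
Qed.

Lemma nbi_lt n k i : i < n -> nbi n k i < n.
Proof. by case: k => [|[|k]] /= H; rewrite ?sm_lt ?pm_lt. Qed.
Lemma nbj_lt m k j : j < m -> nbj m k j < m.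
Proof. by case: k => [|[|[|[|k]]]] /= H; rewrite ?sm_lt ?pm_lt. Qed.
Lemma nbi_opp n k i : k < 4 -> i < n -> nbi n (opp k) (nbi n k i) = i.
Proof. by case: k => [|[|[|[|k]]]] //= _ H; [apply: pm_sm | apply: sm_pm]. Qed.
Lemma nbj_opp m k j : k < 4 -> j < m -> nbj m (opp k) (nbj m k j) = j.
Proof. by case: k => [|[|[|[|k]]]] //= _ H; [apply: pm_sm | apply: sm_pm]. Qed.

Lemma cyc_sm n (i j : 'I_n) : val j = sm n i -> cyc_adj i j.
Proof. by move=> H; rewrite /cyc_adj H -smE // eqxx. Qed.
Lemma cyc_pm n (i j : 'I_n) : val j = pm n i -> cyc_adj i j.
Proof. by move=> H; rewrite /cyc_adj H (smE (pm_lt (ltn_ord i))) sm_pm // eqxx orbT. Qed.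

Lemma cprod_nb n m (x y : 'I_n * 'I_m) k : k < 4 ->
  val y.1 = nbi n k x.1 -> val y.2 = nbj m k x.2 -> cprod_adj x y.
Proof.
rewrite /cprod_adj; case: x y => [i j] [i' j'] /=.
case: k => [|[|[|[|k]]]] //= _ H1 H2.
- have -> : j = j' by apply: val_inj.
  by rewrite eqxx /= (cyc_sm H1) orbT.
- have -> : j = j' by apply: val_inj.
  by rewrite eqxx /= (cyc_pm H1) orbT.
- have -> : i = i' by apply: val_inj.
  by rewrite eqxx /= (cyc_sm H2).
- have -> : i = i' by apply: val_inj.
  by rewrite eqxx /= (cyc_pm H2).
Qed.

Lemma generic n m (P : nat -> nat -> bool) (d : nat -> nat -> nat) :
  0 < n -> 0 < m ->
  (forall i j, i < n -> j < m ->
     [|| P i j, P (sm n i) j, P (pm n i) j, P i (sm m j) | P i (pm m j)]) ->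
  (forall i j, i < n -> j < m -> P i j ->
     [/\ d i j < 4, P (nbi n (d i j) i) (nbj m (d i j) j) &
         d (nbi n (d i j) i) (nbj m (d i j) j) = opp (d i j)]) ->
  exists D : {set 'I_n * 'I_m}, paired_dominating (@cprod_adj n m) D /\
    #|D| = \sum_(i < n) \sum_(j < m) P i j.
Proof.
case: n => [//|n']; case: m => [//|m'] _ _ Hdom Hmat.
set n := n'.+1; set m := m'.+1.
exists [set x : 'I_n * 'I_m | P x.1 x.2]; split; last first.
  rewrite pair_big /= cardsE -sum1_card big_mkcond /=.
  by apply: eq_bigr => x _; rewrite unfold_in /=; case: (P _ _).
split.
  move=> [i j]; rewrite inE /= => Hn.
  have := Hdom i j (ltn_ord i) (ltn_ord j); rewrite (negbTE Hn) /=.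
  case/or4P => H.
  - exists (inord (sm n i), j); first by rewrite inE /= inordK ?sm_lt.
    by apply: (@cprod_nb _ _ _ _ 0) => //=; rewrite inordK ?sm_lt.
  - exists (inord (pm n i), j); first by rewrite inE /= inordK ?pm_lt.
    by apply: (@cprod_nb _ _ _ _ 1) => //=; rewrite inordK ?pm_lt.
  - exists (i, inord (sm m j)); first by rewrite inE /= inordK ?sm_lt.
    by apply: (@cprod_nb _ _ _ _ 2) => //=; rewrite inordK ?sm_lt.
  - exists (i, inord (pm m j)); first by rewrite inE /= inordK ?pm_lt.
    by apply: (@cprod_nb _ _ _ _ 3) => //=; rewrite inordK ?pm_lt.
exists (fun x : 'I_n * 'I_m =>
  ((inord (nbi n (d x.1 x.2) x.1) : 'I_n), (inord (nbj m (d x.1 x.2) x.2) : 'I_m))).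
move=> [i j]; rewrite inE /= => Hp.
have [Hk HP Hd] := Hmat i j (ltn_ord i) (ltn_ord j) Hp.
have E1 : nat_of_ord (inord (nbi n (d i j) i) : 'I_n) = nbi n (d i j) i by rewrite inordK ?nbi_lt.
have E2 : nat_of_ord (inord (nbj m (d i j) j) : 'I_m) = nbj m (d i j) j by rewrite inordK ?nbj_lt.
split.
- by rewrite inE /= E1 E2.
- exact: (@cprod_nb _ _ _ _ (d i j)).
- rewrite /= E1 E2 Hd nbi_opp ?nbj_opp //.
  by rewrite !inord_val.
Qed.

Definition sw n m (x : 'I_n * 'I_m) : 'I_m * 'I_n := (x.2, x.1).
Lemma swK n m (x : 'I_n * 'I_m) : sw (sw x) = x. Proof. by case: x. Qed.
Lemma sw_inj n m : injective (@sw n m). Proof. exact: can_inj (@swK n m). Qed.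
Lemma adj_sw n m (x y : 'I_n * 'I_m) : cprod_adj (sw x) (sw y) = cprod_adj x y.
Proof. by rewrite /cprod_adj /= orbC. Qed.

Lemma swap_pd n m (D : {set 'I_n * 'I_m}) :
  paired_dominating (@cprod_adj n m) D ->
  paired_dominating (@cprod_adj m n) [set sw x | x in D] /\ #|[set sw x | x in D]| = #|D|.
Proof.
move=> [Hd [f Hf]]; split; last by rewrite card_imset //; apply: sw_inj.
have memE z : (sw z \in [set sw x | x in D]) = (z \in D) by rewrite mem_imset //; apply: sw_inj.
split.
  move=> z' Hz; rewrite -(swK z') memE in Hz.
  have [y Hy Hxy] := Hd _ Hz.
  by exists (sw y); rewrite ?memE // -{1}(swK z') adj_sw.
exists (fun z' => sw (f (sw z'))) => z' Hz; rewrite -(swK z') memE in Hz.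
have [H1 H2 H3] := Hf _ Hz.
split; first by rewrite memE.
  by rewrite -{1}(swK z') adj_sw.
by rewrite swK H3 swK.
Qed.

Lemma gamma_ex (T : finType) (e : rel T) k :
  (exists D, paired_dominating e D /\ #|D| <= k) -> exists g, is_gamma_p e g /\ g <= k.
Proof.
elim: k => [|k IH] [D [HD Hc]].
  exists #|D|; split; last by lia.
  split; first by exists D; split.
  by move=> D' _; lia.
have [Hall|Hnot] := classic (forall D', paired_dominating e D' -> #|D| <= #|D'|).
  by exists #|D|; split; [split; [exists D; split|] | lia].
have [D' HD'] : exists D', paired_dominating e D' /\ #|D'| < #|D|.
  apply: NNPP => Hn; apply: Hnot => D' HD'.
  case: (leqP #|D| #|D'|) => // Hlt; exfalso; apply: Hn; by exists D'.
have [g [Hg Hgk]] : exists g, is_gamma_p e g /\ g <= k.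
  by apply: IH; exists D'; split; [exact: HD'.1 | case: HD' => _; lia].
exists g; split => //; lia.
Qed.

Lemma split6 (Q : nat -> bool) m (b : bool) : 6 <= m -> (forall j, 6 <= j -> Q j = b) ->
  \sum_(j < m) Q j = \sum_(j < 6) Q j + b * (m - 6).
Proof.
move=> Hm HQ.
have E1 : \sum_(j < m) Q j = \sum_(0 <= j < m) Q j by rewrite big_mkord.
have E2 : \sum_(j < 6) Q j = \sum_(0 <= j < 6) Q j by rewrite big_mkord.
rewrite E1 E2 (@big_cat_nat _ _ _ 6) //=.
congr (_ + _); rewrite (eq_big_nat _ _ (F2 := fun _ => nat_of_bool b)).
  by rewrite sum_nat_const_nat mulnC.
by move=> j /andP[Hj _]; rewrite HQ.
Qed.

Definition P6 (i j : nat) : bool :=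
  [|| (i == 0) && ((j <= 1) || (6 <= j)),
      (i == 3) && ~~((j == 3) || (j == 4)) |
      ((i == 1) || (i == 5)) && ((j == 3) || (j == 4))].
Definition d6 (i j : nat) : nat :=
  if i == 0 then (if j %% 2 == 0 then 2 else 3) else (if j %% 2 == 0 then 3 else 2).

Lemma six m : 6 <= m -> m %% 2 = 0 ->
  exists D : {set 'I_6 * 'I_m}, paired_dominating (@cprod_adj 6 m) D /\ #|D| = 2 * m - 2.
Proof.
move=> H6 H2.
have Hdom : forall i j, i < 6 -> j < m ->
     [|| P6 i j, P6 (sm 6 i) j, P6 (pm 6 i) j, P6 i (sm m j) | P6 i (pm m j)].
  move=> i j Hi Hj; rewrite /P6.
  case: i Hi => [|[|[|[|[|[|i]]]]]] // _; rewrite /sm /pm /=;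
  case: (j.+1 =P m) => E1; case: (j =P 0) => E2; lia.
Time idtac.
have Hmat : forall i j, i < 6 -> j < m -> P6 i j ->
     [/\ d6 i j < 4, P6 (nbi 6 (d6 i j) i) (nbj m (d6 i j) j) &
         d6 (nbi 6 (d6 i j) i) (nbj m (d6 i j) j) = opp (d6 i j)].
  move=> i j Hi Hj; rewrite /d6.
  case: i Hi => [|[|[|[|[|[|i]]]]]] // _; rewrite /P6 /= => HP;
   case: (boolP (j %% 2 == 0)) => Ej /=; rewrite /sm /pm /=;
   case: (j.+1 =P m) => E1; case: (j =P 0) => E2; try lia;
   (split; [by [] | lia | case: eqP => ? ; lia]).
have [D [HD Hc]] := @generic 6 m P6 d6 erefl (leq_trans (isT : 0 < 6) H6) Hdom Hmat.
exists D; split => //; rewrite Hc.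
rewrite !big_ord_recr big_ord0 /=.
rewrite !big1_eq (@split6 (P6 0) m true) // ?(@split6 (P6 3) m true) //
  ?(@split6 (P6 1) m false) // ?(@split6 (P6 5) m false) //; try (move=> j Hj; rewrite /P6 /=; lia).
rewrite !big_ord_recr !big_ord0 /=; lia.
Qed.

Definition off n s i := if s <= i then i - s else i + n - s.
Definition G k := k %% 4 < 2.

Lemma cntG a : \sum_(0 <= k < 4 * a + 2) G k = 2 * a + 2.
Proof.
elim: a => [|a IH]; first by rewrite !big_nat_recr //= big_geq.
have -> : 4 * a.+1 + 2 = (4 * a + 2).+4 by lia.
rewrite !big_nat_recr //= IH /G.
have -> : (4 * a + 2).+3 %% 4 = 1 by lia.
have -> : (4 * a + 2).+2 %% 4 = 0 by lia.
have -> : (4 * a + 2).+1 %% 4 = 3 by lia.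
have -> : (4 * a + 2) %% 4 = 2 by lia.
by rewrite /=; lia.
Qed.

Lemma cnt_off a s : s <= 4 * a + 2 ->
  \sum_(i < 4 * a + 2) G (off (4 * a + 2) s i) = 2 * a + 2.
Proof.
set n := 4 * a + 2 => Hs.
have E0 : \sum_(i < n) G (off n s i) = \sum_(0 <= i < n) G (off n s i) by rewrite big_mkord.
rewrite E0 (@big_cat_nat _ _ _ s) //=.
rewrite (big_addn 0 n s).
have E1 : \sum_(0 <= i < s) G (off n s i) = \sum_(0 <= i < s) G (i + (n - s)).
  by apply: eq_big_nat => i /andP[_ Hi]; rewrite /off ifN; [congr G; lia | lia].
have E2 : \sum_(0 <= i < n - s) G (off n s (i + s)) = \sum_(0 <= i < n - s) G i.
  by apply: eq_big_nat => i _; rewrite /off ifT; [congr G; lia | lia].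
have E3 : \sum_(0 <= i < s) G (i + (n - s)) = \sum_(n - s <= k < n) G k.
  by rewrite (big_addn 0 n (n - s)); have -> : n - (n - s) = s by lia.
rewrite E1 E2 E3 addnC -(@big_cat_nat _ _ _ (n - s)) //; last by lia.
exact: cntG.
Qed.

Lemma L1 a s i : s < 4 * a + 2 -> i < 4 * a + 2 ->
  [|| G (off (4*a+2) s i), G (off (4*a+2) s (sm (4*a+2) i)) | G (off (4*a+2) s (pm (4*a+2) i))].
Proof.
move=> Hs Hi; rewrite /G /off /sm /pm.
case: (i.+1 =P 4*a+2) => E1; case: (i =P 0) => E2;
 repeat case: ifP => ?; lia.
Qed.

Definition relS a s s' := (s' = s + 2) \/ (s = 4 * a /\ s' = 0).

Lemma L2 a s s' i : s < 4 * a + 2 -> s' < 4 * a + 2 -> relS a s s' -> i < 4 * a + 2 ->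
  G (off (4*a+2) s i) || G (off (4*a+2) s' i).
Proof.
move=> Hs Hs' Hr Hi; rewrite /G /off /relS in Hr *.
repeat case: ifP => ?; lia.
Qed.

Lemma L4 a s i : s < 4 * a + 2 -> i < 4 * a + 2 -> off (4*a+2) s i %% 4 = 0 ->
  off (4*a+2) s (sm (4*a+2) i) %% 4 = 1.
Proof.
move=> Hs Hi; rewrite /off /sm.
case: (i.+1 =P 4*a+2) => E1; repeat case: ifP => ?; lia.
Qed.

Lemma L5 a s i : s < 4 * a + 2 -> i < 4 * a + 2 -> off (4*a+2) s i %% 4 = 1 ->
  off (4*a+2) s (pm (4*a+2) i) %% 4 = 0.
Proof.
move=> Hs Hi; rewrite /off /pm.
case: (i =P 0) => E1; repeat case: ifP => ?; lia.
Qed.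

Definition sh a j := if j <= 4 * a then j else if j %% 4 == 2 then 0 else 4 * a.

Lemma sh_lt a j : sh a j < 4 * a + 2.
Proof. rewrite /sh; repeat case: ifP => ?; lia. Qed.

Lemma L3 a b j : a <= b -> j < 4 * b + 2 -> j %% 2 = 1 ->
  relS a (sh a (pm (4*b+2) j)) (sh a (sm (4*b+2) j)) \/
  relS a (sh a (sm (4*b+2) j)) (sh a (pm (4*b+2) j)).
Proof.
move=> Hab Hj Ho; rewrite /relS /sh /sm /pm.
case: (j.+1 =P 4*b+2) => E1; case: (j =P 0) => E2; rewrite ?leq0n /=; repeat (case: ifP => ?); lia.
Qed.

Lemma cnt_even k c : \sum_(j < 2 * k) (if j %% 2 == 0 then c else 0) = k * c.
Proof.
rewrite -(big_mkord (fun _ => true) (fun j => if j %% 2 == 0 then c else 0)).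
elim: k => [|k IH]; first by rewrite big_geq.
have -> : 2 * k.+1 = (2 * k).+2 by lia.
rewrite !big_nat_recr //= IH.
have -> : (2 * k).+1 %% 2 == 0 = false by apply/eqP; lia.
have -> : (2 * k) %% 2 == 0 = true by apply/eqP; lia.
lia.
Qed.

Definition PS a i j := (j %% 2 == 0) && G (off (4*a+2) (sh a j) i).
Definition dS a i j := if off (4*a+2) (sh a j) i %% 4 == 0 then 0 else 1.

Lemma shiftc a b : a <= b ->
  exists D : {set 'I_(4*a+2) * 'I_(4*b+2)},
    paired_dominating (@cprod_adj (4*a+2) (4*b+2)) D /\ #|D| = (2 * b + 1) * (2 * a + 2).
Proof.
move=> Hab.
have Hdom : forall i j, i < 4*a+2 -> j < 4*b+2 ->
  [|| PS a i j, PS a (sm (4*a+2) i) j, PS a (pm (4*a+2) i) j,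
      PS a i (sm (4*b+2) j) | PS a i (pm (4*b+2) j)].
  move=> i j Hi Hj; rewrite /PS.
  case: (boolP (j %% 2 == 0)) => Ej /=.
    by have := L1 (sh_lt a j) Hi; case/or3P => ->; rewrite ?orbT.
  have Ep : pm (4*b+2) j %% 2 == 0.
    by rewrite /pm; case: ifP => ?; apply/eqP; lia.
  have Es : sm (4*b+2) j %% 2 == 0.
    by rewrite /sm; case: ifP => ?; apply/eqP; lia.
  rewrite Ep Es /=.
  have Ho : j %% 2 = 1 by lia.
  case: (L3 Hab Hj Ho) => Hr.
    by have /orP[->|->] := L2 (sh_lt _ _) (sh_lt _ _) Hr Hi; rewrite ?orbT.
  by have /orP[->|->] := L2 (sh_lt _ _) (sh_lt _ _) Hr Hi; rewrite ?orbT.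
have Hmat : forall i j, i < 4*a+2 -> j < 4*b+2 -> PS a i j ->
     [/\ dS a i j < 4, PS a (nbi (4*a+2) (dS a i j) i) (nbj (4*b+2) (dS a i j) j) &
         dS a (nbi (4*a+2) (dS a i j) i) (nbj (4*b+2) (dS a i j) j) = opp (dS a i j)].
  move=> i j Hi Hj /andP[Ej HG]; rewrite /dS.
  case: eqP => H0 /=.
    have H1 := L4 (sh_lt a j) Hi H0.
    by rewrite /PS Ej /G H1 /=.
  have H1 : off (4*a+2) (sh a j) i %% 4 = 1 by move: HG; rewrite /G; lia.
  have H2 := L5 (sh_lt a j) Hi H1.
  by rewrite /PS Ej /G H2 /=.
have [D [HD Hc]] := @generic _ _ (PS a) (dS a) (ltn_addl _ (isT : 0 < 2)) (ltn_addl _ (isT : 0 < 2)) Hdom Hmat.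
exists D; split => //; rewrite Hc exchange_big /=.
rewrite (eq_bigr (fun j : 'I_(4*b+2) => if j %% 2 == 0 then 2 * a + 2 else 0)).
  have -> : 4 * b + 2 = 2 * (2 * b + 1) by lia.
  by rewrite cnt_even.
move=> j _; rewrite /PS; case: ifP => Ej /=.
  by rewrite cnt_off //; apply: ltnW; apply: sh_lt.
by rewrite big1.
Qed.

Theorem theorem5p5 (n m : nat) :
  5 <= n -> 5 <= m -> m %% 4 = 2 -> n %% 4 = 2 ->
  exists g : nat, is_gamma_p (@cprod_adj n m) g /\
  4 * g + 24 <= (n + 2) * (m + 2).
Proof.
move=> Hn Hm Hm4 Hn4.
suff [k [Hk Hb]] : exists k, (exists D, paired_dominating (@cprod_adj n m) D /\ #|D| <= k) /\
                        4 * k + 24 <= (n + 2) * (m + 2).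
  have [g [Hg Hgk]] := gamma_ex Hk.
  by exists g; split => //; lia.
have [a Ea] : exists a, n = 4 * a + 2 by exists (n %/ 4); lia.
have [b Eb] : exists b, m = 4 * b + 2 by exists (m %/ 4); lia.
have [Ha1|Ha] := eqVneq a 1.
  subst; have [D [HD Hc]] := @six (4 * b + 2) ltac:(lia) ltac:(lia).
  exists (2 * (4 * b + 2) - 2); split; last by lia.
  by exists D; split => //; rewrite Hc.
have [Hb1|Hb] := eqVneq b 1.
  subst; have [D [HD Hc]] := @six (4 * a + 2) ltac:(lia) ltac:(lia).
  have [HD' Hc'] := swap_pd HD.
  exists (2 * (4 * a + 2) - 2); split; last by lia.
  by eexists; split; [exact: HD' | rewrite Hc' Hc].
subst; case: (leqP a b) => Hab.
  have [D [HD Hc]] := shiftc Hab.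
  exists ((2 * b + 1) * (2 * a + 2)); split; last by nia.
  by exists D; split => //; rewrite Hc.
have [D [HD Hc]] := shiftc (ltnW Hab).
have [HD' Hc'] := swap_pd HD.
exists ((2 * a + 1) * (2 * b + 2)); split; last by nia.
by eexists; split; [exact: HD' | rewrite Hc' Hc].
Qed.
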